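(* Let $0<\varepsilon\le 1/2$, let $X\subset\mathbb{R}^d$ be a finite nonempty (multi)set with $n=|X|$, and $C\subset\mathbb{R}^d$ a finite nonempty set. Define $R\ge0$ by $R^2 = \frac{\varepsilon^2}{41}\cdot\frac{\Phi(C,X)}{n}$, let $X^{near} = \{x\in X: \min_{c\in C}\|x-c\|\le R\}$ and $\bar n = |X^{near}|$. Then $\Delta(X)\ge\frac{16\,\bar n}{\varepsilon^2}R^2$.
   Context: $\mu(Y)$ denotes the centroid of a finite multiset $Y$, $\Delta(Y)=\sum_{y\in Y}\|y-\mu(Y)\|^2$, and $\Phi(C,Y)=\sum_{y\in Y}\min_{c\in C}\|y-c\|^2$. *)

(* Defs.v *)
(* Points of R^d are row vectors 'rV[R]_d over a real closed field. *)
From HB Require Import structures.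
From mathcomp Require Import all_boot all_order all_algebra.
Set Implicit Arguments. Unset Strict Implicit. Unset Printing Implicit Defensive.
Import Order.TTheory GRing.Theory Num.Theory.
Local Open Scope ring_scope.

Definition enorm (R : rcfType) (d : nat) (x : 'rV[R]_d) : R :=
  Num.sqrt (\sum_(i < d) x 0 i ^+ 2).

(* centroid mu(Y) of a finite multiset Y (a seq) *)
Definition centroid (R : rcfType) (d : nat) (Y : seq 'rV[R]_d) : 'rV[R]_d :=
  (size Y)%:R^-1 *: \sum_(y <- Y) y.

Definition Delta (R : rcfType) (d : nat) (Y : seq 'rV[R]_d) : R :=
  \sum_(y <- Y) enorm (y - centroid Y) ^+ 2.

(* min_{c in C} ||x - c||, for nonempty C (the initial value is the value
   at an element of C, so it does not affect the minimum) *)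
Definition distC (R : rcfType) (d : nat) (C : seq 'rV[R]_d) (x : 'rV[R]_d) : R :=
  \big[Num.min/enorm (x - head 0 C)]_(c <- C) enorm (x - c).

Definition sqdistC (R : rcfType) (d : nat) (C : seq 'rV[R]_d) (x : 'rV[R]_d) : R :=
  \big[Num.min/enorm (x - head 0 C) ^+ 2]_(c <- C) enorm (x - c) ^+ 2.

Definition Phi (R : rcfType) (d : nat) (C Y : seq 'rV[R]_d) : R :=
  \sum_(y <- Y) sqdistC C y.

(* Main.v *)
Require Import Defs.
From HB Require Import structures.
From mathcomp Require Import all_boot all_order all_algebra.
From mathcomp Require Import ring lra.
Import Order.TTheory GRing.Theory Num.Theory.
Local Open Scope ring_scope.


Section Aux.
Set Implicit Arguments. Unset Strict Implicit.
Variable R : rcfType.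

Lemma bigmin_le (T : eqType) (f : T -> R) a (s : seq T) c :
  c \in s -> \big[Num.min/a]_(x <- s) f x <= f c.
Proof.
elim: s => [|x s IH] //=; rewrite in_cons big_cons => /orP [/eqP-> | Hc].
  by rewrite ge_min lexx.
by rewrite ge_min IH // orbT.
Qed.

Lemma bigmin_att (T : eqType) (f : T -> R) a (s : seq T) :
  \big[Num.min/a]_(x <- s) f x = a \/ exists2 c, c \in s & \big[Num.min/a]_(x <- s) f x = f c.
Proof.
elim: s => [|x s IH]; first by rewrite big_nil; left.
rewrite big_cons minEle; case: ifP => _.
  by right; exists x => //; rewrite in_cons eqxx.
case: IH => [->|[c Hc ->]]; first by left.
by right; exists c => //; rewrite in_cons Hc orbT.
Qed.

Lemma bigmin_att_head (T : eqType) (f : T -> R) (s : seq T) h :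
  s != [::] -> exists2 c, c \in s & \big[Num.min/f (head h s)]_(x <- s) f x = f c.
Proof.
case: s => [//|y s] _ /=.
case: (bigmin_att f (f y) (y :: s)) => [->|//].
by exists y; rewrite // in_cons eqxx.
Qed.

Variable d : nat.
Definition sq (v : 'rV[R]_d) := \sum_(i < d) v 0 i ^+ 2.

Lemma enorm_sq v : enorm v ^+ 2 = sq v.
Proof. by rewrite /enorm sqr_sqrtr //; apply: sumr_ge0 => i _; exact: sqr_ge0. Qed.

Lemma sq_ge0 v : 0 <= sq v.
Proof. by apply: sumr_ge0 => i _; exact: sqr_ge0. Qed.

Lemma sq_add_le a b : 4%:R * sq (a + b) <= 5%:R * sq a + 20%:R * sq b.
Proof.
rewrite /sq !mulr_sumr -big_split; apply: ler_sum => i _ /=; rewrite mxE.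
have := sqr_ge0 (a 0 i - 4%:R * b 0 i); nra.
Qed.

Lemma sum_seq_const (T : Type) (s : seq T) (k : R) : \sum_(x <- s) k = (size s)%:R * k.
Proof.
elim: s => [|x s IH]; first by rewrite big_nil mul0r.
by rewrite big_cons IH /= -addn1 natrD; ring.
Qed.

Lemma sum_filter_le (T : Type) (s : seq T) (P : pred T) (F : T -> R) :
  (forall x, 0 <= F x) -> \sum_(x <- [seq x <- s | P x]) F x <= \sum_(x <- s) F x.
Proof.
move=> H; elim: s => [|x s IH] //=.
rewrite big_cons; case: ifP => _; rewrite ?big_cons; first by rewrite lerD2l.
by rewrite -[X in X <= _]add0r lerD.
Qed.

Lemma variance (X : seq 'rV[R]_d) c : X != [::] ->
  \sum_(x <- X) sq (x - c) = \sum_(x <- X) sq (x - centroid X) + (size X)%:R * sq (centroid X - c).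
Proof.
move=> XN; set mu := centroid X.
have Hs : \sum_(x <- X) (x - mu) = 0.
  rewrite sumrB /mu /centroid.
  have -> : \sum_(x <- X) ((size X)%:R^-1 *: \sum_(y <- X) y) = (size X)%:R *: ((size X)%:R^-1 *: \sum_(y <- X) y).
    move: ((size X)%:R^-1 *: \sum_(y <- X) y) => v.
    elim: (X) => [|x s IH]; first by rewrite big_nil scale0r.
    by rewrite big_cons IH /= [(size s).+1%:R]mulrS scalerDl scale1r.
  rewrite scalerA mulfV ?scale1r ?subrr //.
  by rewrite pnatr_eq0; case: (X) XN.
have E : forall x, sq (x - c) = sq (x - mu) + sq (mu - c) + 2%:R * \sum_(i < d) (x - mu) 0 i * (mu - c) 0 i.
  move=> x; rewrite /sq mulr_sumr -!big_split /=; apply: eq_bigr => i _; rewrite !mxE; ring.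
under eq_bigr do rewrite E.
rewrite !big_split /= sum_seq_const -mulr_sumr.
rewrite [X in 2%:R * X]exchange_big /=.
have -> : \sum_(i < d) \sum_(x <- X) (x - mu) 0 i * (mu - c) 0 i = 0.
  rewrite big1 // => i _; rewrite -mulr_suml -summxE Hs mxE mul0r //.
by rewrite mulr0 addr0.
Qed.

End Aux.
Lemma alg (R : rcfType) (n nb P D T Q : R) :
  0 < n -> 0 <= nb -> nb <= n -> 0 <= D -> 0 <= T -> 0 <= Q ->
  P <= D + n * T -> nb * (4%:R * T - 20%:R * Q) <= 5%:R * D ->
  164%:R * n * Q <= P ->
  16%:R * nb * P <= 41%:R * n * D.
Proof.
move=> n0 nb0 nbn D0 T0 Q0 H2 H3 H4.
have A : 16%:R * nb * P <= 16%:R * nb * D + 16%:R * nb * (n * T) by nra.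
have B : 16%:R * nb * D <= 16%:R * n * D by nra.
case: (lerP (25%:R * Q) T) => HT.
  have C : 16%:R * nb * T <= 25%:R * D by nra.
  nra.
have C : 139%:R * n * Q <= D by nra.
have E : n * T <= D by nra.
have F : nb * (n * T) <= n * D by nra.
nra.
Qed.

Theorem mainTheorem9 (R : rcfType) (d : nat) (eps : R)
    (X C : seq 'rV[R]_d) (Rad : R) :
  0 < eps -> eps <= 2^-1 ->
  X != [::] -> C != [::] ->
  0 <= Rad ->
  Rad ^+ 2 = eps ^+ 2 / 41%:R * (Phi C X / (size X)%:R) ->
  let Xnear := [seq x <- X | distC C x <= Rad] in
  16%:R * (size Xnear)%:R / eps ^+ 2 * Rad ^+ 2 <= Delta X.
Proof.
move=> e0 e2 XN CN R0 HR /=.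
set Xnear := [seq x <- X | _].
set mu := centroid X.
have n0 : 0 < (size X)%:R :> R by rewrite ltr0n; case: (X) XN.
have HD : Delta X = \sum_(x <- X) sq (x - mu).
  by rewrite /Delta; apply: eq_bigr => x _; rewrite enorm_sq.
have [c0 c0C Hc0] := bigmin_att_head (fun c => enorm (mu - c) ^+ 2) 0 CN.
set T := sq (mu - c0).
have HT : forall c, c \in C -> T <= sq (mu - c).
  move=> c cC; rewrite /T -!enorm_sq -Hc0; exact: (bigmin_le (fun c => enorm (mu - c) ^+ 2)).
have H2 : Phi C X <= Delta X + (size X)%:R * T.
  rewrite HD /T -variance //; apply: ler_sum => x _.
  rewrite -enorm_sq; exact: (bigmin_le (fun c => enorm (x - c) ^+ 2)).
have sqN : forall v : 'rV[R]_d, sq (- v) = sq v.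
  by move=> v; rewrite /sq; apply: eq_bigr => i _; rewrite mxE sqrrN.
have H3 : (size Xnear)%:R * (4%:R * T - 20%:R * Rad ^+ 2) <= 5%:R * Delta X.
  rewrite -sum_seq_const HD [X in _ <= X]mulr_sumr.
  apply: le_trans (_ : \sum_(x <- Xnear) 5%:R * sq (x - mu) <= _); last first.
    apply: (@sum_filter_le _ _ _ _ (fun x => 5%:R * sq (x - mu))) => x.
    by rewrite mulr_ge0 ?ler0n ?sq_ge0.
  rewrite big_seq [X in _ <= X]big_seq; apply: ler_sum => x.
  rewrite mem_filter => /andP [Hx _].
  have [cx cxC Hcx] := bigmin_att_head (fun c => enorm (x - c)) 0 CN.
  rewrite /distC Hcx in Hx.
  have Hq : sq (x - cx) <= Rad ^+ 2.
    rewrite -enorm_sq lerXn2r ?nnegrE ?sqrtr_ge0 //.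
  have := HT _ cxC.
  have := sq_add_le (mu - x) (x - cx).
  rewrite addrA subrK -[mu - x]opprB sqN.
  lra.
have H4 : 164%:R * (size X)%:R * Rad ^+ 2 <= Phi C X.
  rewrite HR.
  have P0 : 0 <= Phi C X.
    apply: sumr_ge0 => x _; rewrite /sqdistC.
    have [c _ ->] := bigmin_att_head (fun c => enorm (x - c) ^+ 2) 0 CN.
    exact: sqr_ge0.
  have ee : eps ^+ 2 <= 4%:R^-1.
    have -> : 4%:R^-1 = (2^-1) ^+ 2 :> R by field.
    by rewrite lerXn2r ?nnegrE ?invr_ge0 ?ler0n // ltW.
  have -> : 164%:R * (size X)%:R * (eps ^+ 2 / 41%:R * (Phi C X / (size X)%:R))
     = (4%:R * eps ^+ 2) * Phi C X.
    by field; rewrite gt_eqF.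
  have : 4%:R * eps ^+ 2 <= 1 by lra.
  nra.
have nbn : (size Xnear)%:R <= (size X)%:R :> R.
  by rewrite ler_nat size_filter count_size.
have D0 : 0 <= Delta X by rewrite HD; apply: sumr_ge0 => x _; exact: sq_ge0.
have Hg := alg n0 (ler0n _ _) nbn D0 (sq_ge0 _) (sqr_ge0 Rad) H2 H3 H4.
have -> : 16%:R * (size Xnear)%:R / eps ^+ 2 * Rad ^+ 2 =
  16%:R * (size Xnear)%:R * Phi C X / (41%:R * (size X)%:R).
  rewrite HR; field; rewrite ?gt_eqF // ?pnatr_eq0 ?expf_eq0 ?gt_eqF //.
rewrite ler_pdivrMr ?mulr_gt0 ?ltr0n //.
lra.
by rewrite -(ltr0n R).
Qed.
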